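(* Let $Y$ be a Young diagram with row lengths $a_1\ge\cdots\ge a_m\ge0$, let $P$ be a 2-cover of $H(Y)$, and let $Q=P\cap(C\times S)$. Then $$|P|\ge |Q|+\sum_{i=1}^m\nu(a_i,Q).$$
   Context: $H(Y)$ is the hypergraph with vertex sides $R=\{r_1,\dots,r_m\}$, $C=\{c_1,\dots,c_{a_1}\}$, $S=\{s_1,\dots,s_{a_1}\}$ and edges $\{r_i,c_j,s_k\}$ for $1\le i\le m$, $1\le j,k\le a_i$. For disjoint sets $A,B$, $A\times B$ is the set of pairs $\{a,b\}$ with $a\in A,b\in B$. A 2-cover of $H(Y)$ is a set of 2-element vertex sets such that every edge of $H(Y)$ contains a member of it. $\nu(\ell,Q)$ is the matching number of the bipartite graph with sides $\{c_1,\dots,c_\ell\}$, $\{s_1,\dots,s_\ell\}$ and edges $\{c_js_k:1\le j,k\le\ell\}\setminus Q$. *)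

(* Defs.v *)
From mathcomp Require Import all_boot.
Set Implicit Arguments. Unset Strict Implicit. Unset Printing Implicit Defensive.

(* Vertices of H(Y): R = 'I_m (rows), C = 'I_n, S = 'I_n, with n = a_1.
   Indices are 0-based: r_i ~ rv (i-1), etc. *)
Definition vert (m n : nat) := ('I_m + ('I_n + 'I_n))%type.
Definition rv {m n} (i : 'I_m) : vert m n := inl i.
Definition cv {m n} (j : 'I_n) : vert m n := inr (inl j).
Definition sv {m n} (k : 'I_n) : vert m n := inr (inr k).

Definition two_cover (a : seq nat) (P : {set {set vert (size a) (head 0 a)}}) :=
  (forall e, e \in P -> #|e| = 2) /\
  (forall (i : 'I_(size a)) (j k : 'I_(head 0 a)),
      j < nth 0 a i -> k < nth 0 a i ->
      exists2 e, e \in P & e \subset [set rv i; cv j; sv k]).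
Arguments two_cover : clear implicits.

Definition CS_part {m n} (P : {set {set vert m n}}) : {set {set vert m n}} :=
  [set e in P | [exists j, exists k, e == [set cv j; sv k]]].

(* M is a matching (given as a set of pairs (j,k) = edge c_j s_k) in the bipartite
   graph on c_1..c_l, s_1..s_l with edges {c_j s_k} \ Q. *)
Definition is_matching {m n} (l : nat) (Q : {set {set vert m n}})
    (M : {set 'I_n * 'I_n}) : bool :=
  [forall p in M, [&& p.1 < l, p.2 < l & [set cv p.1; sv p.2] \notin Q]] &&
  [forall p in M, forall q in M, ((p.1 == q.1) || (p.2 == q.2)) ==> (p == q)].

Definition nu {m n} (l : nat) (Q : {set {set vert m n}}) : nat :=
  \max_(M : {set 'I_n * 'I_n} | is_matching l Q M) #|M|.

(* Main.v *)
Require Import Defs.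
From mathcomp Require Import all_boot.

Lemma two_of_three (T : finType) (e : {set T}) a b c :
  a != b -> a != c -> b != c ->
  e \subset [set a; b; c] -> #|e| = 2 ->
  [\/ e = [set a; b], e = [set a; c] | e = [set b; c]].
Proof.
move=> ab ac bc sub ce.
have key : forall x y z, z \notin e -> e \subset [set x; y; z] -> #|[set x; y]| <= 2 ->
   e = [set x; y].
  move=> x y z ze s c2; apply/eqP; rewrite eqEcard ce c2 andbT.
  apply/subsetP=> w we; have := subsetP s w we; rewrite !inE.
  rewrite -orbA => /or3P[] /eqP wz; subst w; rewrite ?eqxx ?orbT //; by rewrite we in ze.
have c2 : forall x y : T, #|[set x; y]| <= 2.
  by move=> x y; rewrite cards2; case: (x != y).
case: (boolP (c \in e)) => ce'; last by constructor 1; apply: (key _ _ c).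
case: (boolP (b \in e)) => be'.
  case: (boolP (a \in e)) => ae'.
    have : [set a; b; c] \subset e.
      by apply/subsetP=> w; rewrite !inE -orbA => /or3P[]/eqP->.
    move/subset_leq_card; rewrite ce setUC cardsU1 cards2 !inE ab (eq_sym c a) (eq_sym c b) (negbTE ac) (negbTE bc) //.
  constructor 3; apply: (key _ _ a) => //.
  apply/subsetP=> w we; have := subsetP sub w we; rewrite !inE.
  by rewrite -orbA => /or3P[]->; rewrite ?orbT.
constructor 2; apply: (key _ _ b) => //.
apply/subsetP=> w we; have := subsetP sub w we; rewrite !inE.
by case/orP=> [/orP[]|]->; rewrite ?orbT.
Qed.

Lemma pair_inj (T : finType) (x y z : T) :
  [set x; y] = [set x; z] -> y != x -> y = z.
Proof.
move=> E yx; have : y \in [set x; z] by rewrite -E !inE eqxx orbT.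
by rewrite !inE (negbTE yx) /= => /eqP.
Qed.

Lemma card_bigcup_disj (I T : finType) (r : seq I) (F : I -> {set T}) :
  uniq r -> (forall i j, i != j -> [disjoint F i & F j]) ->
  #|\bigcup_(i <- r) F i| = \sum_(i <- r) #|F i|.
Proof.
move=> + dis; elim: r => [|x r IH] /=; first by rewrite !big_nil cards0.
case/andP => xr ur; rewrite !big_cons -IH //.
apply/eqP; rewrite (leq_card_setU _ _).2 bigcup_seq.
apply: bigcup_disjoint => i ir; apply: dis.
by apply: contraNneq xr => ->.
Qed.

Theorem corollary2 (a : seq nat) (Ha : sorted geq a)
    (P : {set {set vert (size a) (head 0 a)}}) (HP : two_cover a P) :
  #|CS_part P| + \sum_(i < size a) nu (nth 0 a i) (CS_part P) <= #|P|.
Proof.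
set m := size a; set n := head 0 a; set Q := CS_part P.
case: HP => H2 Hcov.
pose Pi (i : 'I_m) := [set e in P | [exists x : 'I_n + 'I_n, e == [set rv i; (inr x : vert m n)]]].
have disPi : forall i j, i != j -> [disjoint Pi i & Pi j].
  move=> i j ij; rewrite -setI_eq0; apply/eqP/setP => e; rewrite !inE.
  apply/negP => /andP[/andP[_ /existsP[x /eqP ->]] /andP[_ /existsP[y /eqP E]]].
  have : rv i \in [set rv j; (inr y : vert m n)] by rewrite -E !inE eqxx.
  by rewrite !inE /rv; case/orP => /eqP // [] /eqP; rewrite (negbTE ij).
have disQ : [disjoint Q & \bigcup_(i <- index_enum 'I_m) Pi i].
  rewrite bigcup_seq; apply: bigcup_disjoint => i _.
  rewrite -setI_eq0; apply/eqP/setP => e; rewrite !inE.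
  apply/negP => /andP[/andP[_ /existsP[j /existsP[k /eqP ->]]] /andP[_ /existsP[y /eqP E]]].
  have : rv i \in [set (cv j : vert m n); sv k] by rewrite E !inE eqxx.
  by rewrite !inE.
have nuP : forall i : 'I_m, nu (nth 0 a i) Q <= #|Pi i|.
  move=> i; apply/bigmax_leqP => M /andP[/forall_inP H1 /forall_inP Hm].
  pose f (p : 'I_n * 'I_n) : {set vert m n} :=
    if [set rv i; cv p.1] \in P then [set rv i; cv p.1] else [set rv i; sv p.2].
  have fin : forall p, p \in M -> f p \in Pi i.
    move=> p pM; have /and3P[l1 l2 nQ] := H1 p pM.
    have [e eP es] := Hcov i p.1 p.2 l1 l2.
    have := @two_of_three _ e (rv i) (cv p.1) (sv p.2) isT isT isT es (H2 e eP).
    rewrite /f; case: ifP => [cin|cnin].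
      by move=> _; rewrite inE cin; apply/existsP; exists (inl p.1).
    case=> E; rewrite E in eP.
    - by rewrite cnin in eP.
    - by rewrite inE eP; apply/existsP; exists (inr p.2).
    - by move: nQ; rewrite inE eP /=; case/negP;
         apply/existsP; exists p.1; apply/existsP; exists p.2.
  have finj : {in M &, injective f}.
    move=> p q pM qM; have := Hm p pM; move/forall_inP/(_ q qM)/implyP => Hpq.
    rewrite /f; case: ifP => _; case: ifP => _ E; have := @pair_inj _ _ _ _ E isT;
      rewrite /cv /sv => -[]; try (by []); try (move=> e; apply/eqP; apply: Hpq; by rewrite e eqxx ?orbT).
  rewrite -(card_in_imset finj); apply: subset_leq_card.
  by apply/subsetP => x /imsetP[p pM ->]; apply: fin.
have QP : Q :|: \bigcup_(i <- index_enum 'I_m) Pi i \subset P.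
  apply/subsetP => e; rewrite inE => /orP[|/bigcupP[i _]]; rewrite inE => /andP[] //.
apply: leq_trans (subset_leq_card QP).
have E := (leq_card_setU Q (\bigcup_(i <- index_enum 'I_m) Pi i)).2.
rewrite disQ in E; rewrite (eqP E) card_bigcup_disj ?index_enum_uniq //.
by rewrite leq_add2l; apply: leq_sum => i _; apply: nuP.
Qed.
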